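(* Let $n\ge 2$, $q\ge 2$ be integers and let $S\subseteq \bigcup_{i=2}^n \mathbb{Z}_q^i$ be a $q$-ary non-overlapping code. Define $\tilde S=\bigcup_{\mathbf{s}\in S}\tilde{\mathbf{s}}$, where $$\tilde{\mathbf{s}}=\{\mathbf{s}\,\|\,\mathrm{suf}(\mathbf{x},n-|\mathbf{s}|) : \mathbf{x}\in S,\ |\mathbf{x}|>n-|\mathbf{s}|\}.$$ Then $\tilde S\subseteq\mathbb{Z}_q^n$ is a fixed-length non-overlapping code of length $n$, i.e. $\mathrm{pre}(\mathbf{u}')\cap\mathrm{suf}(\mathbf{v}')=\emptyset$ for all $\mathbf{u}',\mathbf{v}'\in\tilde S$ (possibly equal).
   Context: $\mathbb{Z}_q=\{0,1,\dots,q-1\}$; words are finite strings over $\mathbb{Z}_q$, $|\mathbf{s}|$ denotes the length of $\mathbf{s}$, and $\mathbf{u}\|\mathbf{v}$ denotes concatenation. For $\mathbf{s}=(s_1,\dots,s_m)$ and $0\le k\le m$, $\mathrm{pre}(\mathbf{s},k)=(s_1,\dots,s_k)$ and $\mathrm{suf}(\mathbf{s},k)=(s_{m-k+1},\dots,s_m)$, with $\mathrm{pre}(\mathbf{s},0)$, $\mathrm{suf}(\mathbf{s},0)$ the empty string. $\mathrm{pre}(\mathbf{s})=\{\mathrm{pre}(\mathbf{s},k):1\le k\le m-1\}$ and $\mathrm{suf}(\mathbf{s})=\{\mathrm{suf}(\mathbf{s},k):1\le k\le m-1\}$. A code $S\subseteq\bigcup_{i=2}^n\mathbb{Z}_q^i$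 is non-overlapping if (1) for all $\mathbf{u},\mathbf{v}\in S$ (possibly equal), $\mathrm{pre}(\mathbf{u})\cap\mathrm{suf}(\mathbf{v})=\emptyset$, and (2) for all distinct $\mathbf{u},\mathbf{v}\in S$ with $|\mathbf{u}|\le|\mathbf{v}|$, $\mathbf{u}$ is not a (contiguous) subword of $\mathbf{v}$, i.e. $\mathbf{u}\neq(v_{j+1},\dots,v_{j+|\mathbf{u}|})$ for all $0\le j\le|\mathbf{v}|-|\mathbf{u}|$. A fixed-length code is one all of whose codewords have the same length; for it condition (2) is automatic. *)

(* Defs.v *)
From mathcomp Require Import all_boot.
Set Implicit Arguments. Unset Strict Implicit. Unset Printing Implicit Defensive.

Definition word (q : nat) (s : seq nat) : bool := all (fun a => a < q) s.

Definition pref (s : seq nat) (k : nat) : seq nat := take k s.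
Definition suff (s : seq nat) (k : nat) : seq nat := drop (size s - k) s.

Definition pre_suf_disjoint (u v : seq nat) : Prop :=
  forall k l, 1 <= k <= (size u).-1 -> 1 <= l <= (size v).-1 ->
    pref u k <> suff v l.

Definition subword (u v : seq nat) : Prop :=
  exists j, j <= size v - size u /\ u = take (size u) (drop j v).

Definition nonoverlapping_code (q n : nat) (S : seq nat -> Prop) : Prop :=
  (forall s, S s -> word q s /\ 2 <= size s <= n) /\
  (forall u v, S u -> S v -> pre_suf_disjoint u v) /\
  (forall u v, S u -> S v -> u <> v -> size u <= size v -> ~ subword u v).

Definition tildeS (n : nat) (S : seq nat -> Prop) (w : seq nat) : Prop :=
  exists s x, S s /\ S x /\ n - size s < size x /\ w = s ++ suff x (n - size s).

(* Main.v *)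
Require Import Defs.
From mathcomp Require Import all_boot.
From mathcomp Require Import zify.

Lemma key (q n : nat) (S : seq nat -> Prop) s a w m :
  nonoverlapping_code q n S -> S s -> S w -> 1 <= m < size w ->
  take m (s ++ a) = drop (size w - m) w -> False.
Proof.
move=> [HW [HD HN]] Hs Hw hm.
have [s1 s2] := HW s Hs.
case: (ltnP m (size s)) => hms.
- rewrite take_cat hms => E.
  apply: (HD s w Hs Hw m m _ _ E); lia.
- move=> E.
  have Es : s = take (size s) (drop (size w - m) w).
    by rewrite -E take_takel // take_size_cat.
  apply: (HN s w Hs Hw _ _ _).
  + move=> esw; subst; lia.
  + lia.
  + exists (size w - m); split; [lia | exact Es].
Qed.

Theorem mainTheorem2 (q n : nat) (S : seq nat -> Prop) :
  2 <= n -> 2 <= q -> nonoverlapping_code q n S ->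
  (forall w, tildeS n S w -> word q w /\ size w = n) /\
  (forall u v, tildeS n S u -> tildeS n S v -> pre_suf_disjoint u v).
Proof.
move=> hn hq HS.
have HS' := HS; move: HS' => [HW [HD HN]].
have Hsz : forall w, tildeS n S w -> size w = n.
  move=> w [s [x [Hs [Hx [hlt ->]]]]].
  have [_ /andP[_ h1]] := HW s Hs.
  rewrite size_cat /suff size_drop; lia.
split.
- move=> w Hw; split; last exact: Hsz.
  move: Hw => [s [x [Hs [Hx [hlt ->]]]]].
  have [ws _] := HW s Hs; have [wx _] := HW x Hx.
  rewrite /word all_cat; apply/andP; split; first exact ws.
  apply/allP => y /mem_drop hy; exact: (allP wx y hy).
- move=> u v Hu Hv k l hk hl E.
  have su := Hsz u Hu; have sv := Hsz v Hv.
  have ekl : k = l.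
    have := congr1 size E; rewrite /pref /suff size_take size_drop.
    case: ifP; lia.
  subst l.
  move: Hu => [s [x [Hs [Hx [hlx Eu]]]]].
  move: Hv => [t [y [Ht [Hy [hly Ev]]]]].
  have [_ /andP[_ hsn]] := HW s Hs.
  have [_ /andP[ht2 htn]] := HW t Ht.
  move: E; rewrite /pref /suff sv Eu Ev /suff drop_cat.
  case: ifP => hc.
  +
    set j := k - (n - size t).
    move=> E.
    have E2 := congr1 (take j) E.
    rewrite (takel_cat (s1:=drop (n-k) t)) in E2; last by rewrite size_drop; lia.
    rewrite take_takel in E2; last lia.
    rewrite (take_oversize (s:=drop (n-k) t)) in E2; last by rewrite size_drop; lia.
    apply: (@key q n S s (drop (size x - (n - size s)) x) t j HS Hs Ht _); first lia.
    rewrite E2 /j; congr drop; lia.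
  + rewrite drop_drop => E.
    apply: (@key q n S s (drop (size x - (n - size s)) x) y k HS Hs Hy _); first lia.
    rewrite E; congr drop; lia.
Qed.
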